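(* Let $N_c, N_v$ be positive integers, let ${\tt dVc}\in(0,\infty)^{N_c}$ and ${\tt dVv}\in(0,\infty)^{N_v}$, and define $\langle {\tt a},{\tt b}\rangle_c={\tt a}^\top\mathrm{diag}({\tt dVc})\,{\tt b}$ on $\mathbb R^{N_c}$ and $\langle {\tt a},{\tt b}\rangle_v={\tt a}^\top\mathrm{diag}({\tt dVv})\,{\tt b}$ on $\mathbb R^{N_v}$. Let $R:\mathbb R\to(0,\infty)$ be continuously differentiable and non-decreasing, fix $p_0\in\mathbb R$, and set $Q(p)=\int_{p_0}^p \frac{1}{R(q)}\,\mathrm dq$ and $e_{int}(p)=\int_{p_0}^p\frac{R(p)-R(q)}{R(q)}\,\mathrm dq$, all functions being applied componentwise to vectors. Let ${\sf Interp}_{v\leftarrow c}$ be a fixed real $N_v\times N_c$ matrix. Let ${\tt p}(t)\in\mathbb R^{N_c}$ and ${\tt v}(t)\in\mathbb R^{N_v}$, $t\in[0,T]$, be continuously differentiable, set ${\tt rho}=R({\tt p})$ and ${\tt rv}=\mathrm{diag}({\sf Interp}_{v\leftarrow c}{\tt rho})\,{\tt v}$, and suppose that for every $t$ there are real matrices ${\sf DIVr}(t)$ ($N_c\times N_v$), ${\sf rGRAD}(t)$, ${\sf GRAD}(t)$ ($N_v\times N_c$) and ${\sf ADVEC}(t)$ ($N_v\times N_v$) such that (i) ${\sf DIVr}+{\sf rGRAD}^*=0$; (ii) ${\sf rGRAD}\,Q({\tt p})={\sf GRAD}\,{\tt p}$; (iii) ${\sf ADVEC}+{\sf ADVEC}^*=\mathrm{diag}({\sf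 Interp}_{v\leftarrow c}\,{\sf DIVr}\,{\tt v})$; and the semi-discrete isentropic Euler equations $$\frac{\mathrm d\,{\tt rho}}{\mathrm dt}+{\sf DIVr}\,{\tt v}=0,\qquad \frac{\mathrm d\,{\tt rv}}{\mathrm dt}+{\sf ADVEC}\,{\tt v}+{\sf GRAD}\,{\tt p}=0$$ hold. Then the discrete total energy ${\tt E}(t)=\langle {\tt c1},e_{int}({\tt p})\rangle_c+\frac12\langle {\tt v},{\tt rv}\rangle_v$, where ${\tt c1}$ is the vector of all ones, satisfies $\frac{\mathrm d{\tt E}}{\mathrm dt}=0$.
   Context: Adjoints are taken with respect to the weighted inner products: for a real matrix ${\sf A}$ mapping $\mathbb R^{N_{in}}$ (weights ${\tt dV}_{in}$) to $\mathbb R^{N_{out}}$ (weights ${\tt dV}_{out}$), ${\sf A}^*=\mathrm{diag}({\tt dV}_{in})^{-1}{\sf A}^\top\mathrm{diag}({\tt dV}_{out})$, so that $\langle {\tt x},{\sf A}{\tt y}\rangle_{out}=\langle{\sf A}^*{\tt x},{\tt y}\rangle_{in}$. Here $\mathrm{diag}({\tt a})$ is the diagonal matrix with the entries of ${\tt a}$ on its diagonal. The matrices ${\sf DIVr},{\sf rGRAD},{\sf GRAD},{\sf ADVEC}$ are allowed to depend on the state at time $t$. *)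

(* Defs.v *)
From Stdlib Require Import Reals.
From Coquelicot Require Import Coquelicot.
From HB Require Import structures.
From mathcomp Require Import all_boot all_order all_algebra.
From mathcomp Require Import Rstruct.
Set Implicit Arguments. Unset Strict Implicit. Unset Printing Implicit Defensive.
Import GRing.Theory.

Local Open Scope ring_scope.

Definition diagv (n : nat) (a : 'cV[R]_n) : 'M[R]_n := diag_mx a^T.

Definition winner (n : nat) (dV a b : 'cV[R]_n) : R := (a^T *m diagv dV *m b) 0 0.

(* adjoint w.r.t. weighted inner products:
   A : R^{n_in} (weights dVin) -> R^{n_out} (weights dVout),
   A^* = diag(dVin)^{-1} A^T diag(dVout) *)
Definition wadj (nin nout : nat) (dVin : 'cV[R]_nin) (dVout : 'cV[R]_nout)
  (A : 'M[R]_(nout, nin)) : 'M[R]_(nin, nout) :=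
  invmx (diagv dVin) *m A^T *m diagv dVout.

Definition cw (n : nat) (f : R -> R) (x : 'cV[R]_n) : 'cV[R]_n := map_mx f x.

Definition vderiv (n : nat) (f : R -> 'cV[R]_n) (t : R) (df : 'cV[R]_n) : Prop :=
  forall i : 'I_n, is_derive (fun s => f s i 0) t (df i 0).

Definition Qfun (Rf : R -> R) (p0 p : R) : R := RInt (fun q => / Rf q)%R p0 p.

Definition eint (Rf : R -> R) (p0 p : R) : R :=
  RInt (fun q => (Rf p - Rf q) / Rf q)%R p0 p.

Definition ones (n : nat) : 'cV[R]_n := const_mx 1.

Definition energy (Nc Nv : nat) (dVc : 'cV[R]_Nc) (dVv : 'cV[R]_Nv)
  (Rf : R -> R) (p0 : R) (Interp : 'M[R]_(Nv, Nc))
  (p : 'cV[R]_Nc) (v : 'cV[R]_Nv) : R :=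
  winner dVc (ones Nc) (cw (eint Rf p0) p)
  + 2^-1 * winner dVv v (diagv (Interp *m cw Rf p) *m v).

(* Main.v *)
Require Import Defs.
From Stdlib Require Import Reals.
From Coquelicot Require Import Coquelicot.
From HB Require Import structures.
From mathcomp Require Import all_boot all_order all_algebra.
From mathcomp Require Import Rstruct.
From mathcomp Require Import ring lra.
Import Order.TTheory GRing.Theory Num.Theory.
Local Open Scope ring_scope.
Lemma D_add (f g : R -> R) t a b : is_derive f t a -> is_derive g t b ->
  is_derive (fun s => f s + g s) t (a + b).
Proof. move=> Hf Hg. exact: (is_derive_plus f g t a b Hf Hg). Qed.
Lemma D_mul (f g : R -> R) t a b : is_derive f t a -> is_derive g t b ->
  is_derive (fun s => f s * g s) t (a * g t + f t * b).
Proof. move=> Hf Hg. exact: (is_derive_mult f g t a b Hf Hg (fun n m => Rmult_comm n m)). Qed.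
Lemma D_opp (f : R -> R) t a : is_derive f t a -> is_derive (fun s => - f s) t (- a).
Proof. move=> Hf. exact: (is_derive_opp f t a Hf). Qed.
Lemma D_const t (c : R) : is_derive (fun _ => c) t 0.
Proof. exact: (is_derive_const c t). Qed.
Lemma D_id t : is_derive (fun s : R => s) t 1.
Proof. exact: (is_derive_id t). Qed.
Arguments D_add {f g t a b}.
Arguments D_mul {f g t a b}.
Arguments D_opp {f t a}.
Lemma D_ext (f g : R -> R) t a : (forall s, f s = g s) -> is_derive f t a -> is_derive g t a.
Proof. move=> H Hf. exact: (is_derive_ext f g t a H Hf). Qed.
Lemma D_eq (f : R -> R) t a b : is_derive f t a -> a = b -> is_derive f t b.
Proof. by move=> h <-. Qed.
Arguments D_eq {f t a b}.
Lemma D_sum (I : Type) (r : seq I) (f : I -> R -> R) (df : I -> R) t :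
  (forall i, is_derive (f i) t (df i)) ->
  is_derive (fun s => \sum_(i <- r) f i s) t (\sum_(i <- r) df i).
Proof.
move=> H; elim: r => [|a r IH].
  rewrite big_nil; apply: (D_ext (fun _ => 0)); first by move=> s; rewrite big_nil.
  exact: D_const.
rewrite big_cons; apply: (D_ext (fun s => f a s + \sum_(i <- r) f i s)).
  by move=> s; rewrite big_cons.
exact: D_add.
Qed.
Arguments D_sum {I r f df t}.
Section An.
Variables (Rf dRf : R -> R) (p0 : R).
Hypothesis HRpos : forall x, 0 < Rf x.
Hypothesis HRder : forall x, is_derive Rf x (dRf x).
Lemma Rf_neq0 x : Rf x <> 0%R.
Proof. have /RltP := HRpos x. move=> h; apply: Rgt_not_eq. exact: h. Qed.
Lemma inv_cont x : continuous (fun q => / Rf q)%R x.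
Proof.
apply: ex_derive_continuous.
eexists. apply: (is_derive_inv Rf x (dRf x)) => //. exact: Rf_neq0.
Qed.
Lemma inv_exRInt a b : ex_RInt (fun q => / Rf q)%R a b.
Proof. apply: ex_RInt_continuous => z _; exact: inv_cont. Qed.
Lemma Q_der x : is_derive (Qfun Rf p0) x (/ Rf x)%R.
Proof.
apply: (is_derive_RInt (fun q => / Rf q)%R (Qfun Rf p0) p0 x); last exact: inv_cont.
apply: filter_forall => b. rewrite /Qfun. apply: RInt_correct. exact: inv_exRInt.
Qed.
Lemma eint_eq x : eint Rf p0 x = Rf x * Qfun Rf p0 x - (x - p0).
Proof.
rewrite /eint /Qfun.
rewrite (RInt_ext _ (fun q => minus (scal (Rf x) (/ Rf q)%R) 1%R)); last first.
  move=> q _. rewrite /minus /plus /opp /scal /=. rewrite /mult /=. change ((Rf x - Rf q) / Rf q = Rf x * (Rf q)^-1 + - 1); field; apply/eqP; exact: Rf_neq0.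
rewrite RInt_minus; last first.
  - exact: ex_RInt_const.
  - apply: ex_RInt_scal. exact: inv_exRInt.
rewrite RInt_scal; last exact: inv_exRInt.
rewrite RInt_const. rewrite /minus /plus /opp /scal /= /mult /=. change (Rf x * RInt (fun q => (Rf q)^-1) p0 x + - ((x - p0) * 1) = Rf x * RInt (fun q => (Rf q)^-1) p0 x - (x - p0)).
ring.
Qed.
End An.
Lemma trsc n (x y : 'cV[R]_n) (M : 'M[R]_n) : (x^T *m M *m y) 0 0 = (y^T *m M^T *m x) 0 0.
Proof.
have h : forall A : 'M[R]_1, A 0 0 = A^T 0 0 by move=> A; rewrite mxE.
by rewrite h !trmx_mul trmxK mulmxA.
Qed.
Lemma diagvT n (d : 'cV[R]_n) : (diagv d)^T = diagv d.
Proof. by rewrite /diagv tr_diag_mx. Qed.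
Lemma diagvN n (d : 'cV[R]_n) : diagv (- d) = - diagv d.
Proof. by rewrite /diagv linearN /= raddfN. Qed.
Lemma diag_unit n (d : 'cV[R]_n) : (forall i, 0 < d i 0) -> diagv d \in unitmx.
Proof.
move=> H; rewrite unitmxE /diagv det_diag unitfE ; apply/prodf_neq0 => i _.
by rewrite mxE; have := H i; rewrite lt0r => /andP [].
Qed.
Lemma winner_sum n (dV a b : 'cV[R]_n) : winner dV a b = \sum_i a i 0 * dV i 0 * b i 0.
Proof.
rewrite /winner /diagv mxE; apply: eq_bigr => i _; rewrite mul_mx_diag !mxE.
done.
Qed.
Lemma diagv_mul n (a v : 'cV[R]_n) j : (diagv a *m v) j 0 = a j 0 * v j 0.
Proof. by rewrite /diagv mul_diag_mx !mxE. Qed.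
Lemma alg Nc Nv (dVc : 'cV[R]_Nc) (dVv : 'cV[R]_Nv)
  (Hc : diagv dVc \in unitmx) (Hv : diagv dVv \in unitmx)
  (DIVr : 'M[R]_(Nc, Nv)) (rGRAD GRAD : 'M[R]_(Nv, Nc)) (ADVEC : 'M[R]_Nv)
  (Interp : 'M[R]_(Nv, Nc)) (Q p : 'cV[R]_Nc) (v : 'cV[R]_Nv) :
  DIVr + wadj dVc dVv rGRAD = 0 -> rGRAD *m Q = GRAD *m p ->
  ADVEC + wadj dVv dVv ADVEC = diagv (Interp *m (DIVr *m v)) ->
  winner dVc Q (-(DIVr *m v)) + winner dVv v (-(ADVEC *m v + GRAD *m p))
   - 2^-1 * winner dVv v (diagv (Interp *m -(DIVr *m v)) *m v) = 0.
Proof.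
move=> H1 H2 H3.
have eD : DIVr = - wadj dVc dVv rGRAD by apply/eqP; rewrite -addr_eq0 H1.
have oppE : forall m n (M : 'M[R]_(m,n)) i j, (- M) i j = - M i j by move=> *; rewrite mxE.
set a := (v^T *m diagv dVv *m ADVEC *m v) 0 0.
set b := (v^T *m diagv dVv *m GRAD *m p) 0 0.
have t1 : (Q^T *m diagv dVc *m (DIVr *m v)) 0 0 = - b.
  rewrite eD /wadj mulNmx mulmxN !mulmxA -[Q^T *m _ *m invmx _]mulmxA mulmxV // mulmx1 oppE; congr (- _).
  have sc : forall A : 'M[R]_1, A 0 0 = A^T 0 0 by move=> A; rewrite mxE.
  by rewrite -trmx_mul H2 trmx_mul sc !trmx_mul !trmxK diagvT !mulmxA.
have t2 : (v^T *m diagv dVv *m (ADVEC *m v + GRAD *m p)) 0 0 = a + b.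
  by rewrite mulmxDr mxE !mulmxA.
have t3 : (v^T *m diagv dVv *m (diagv (Interp *m (DIVr *m v)) *m v)) 0 0 = a + a.
  rewrite -H3 mulmxDl mulmxDr mxE /wadj !mulmxA -[v^T *m _ *m invmx _]mulmxA mulmxV // mulmx1; congr (_ + _).
  have sc : forall A : 'M[R]_1, A 0 0 = A^T 0 0 by move=> A; rewrite mxE.
  by rewrite sc !trmx_mul !trmxK diagvT !mulmxA.
rewrite /winner !mulmxN diagvN mulNmx mulmxN !oppE t1 t2 t3.
lra.
Qed.

Theorem mainTheorem1
  (Nc Nv : nat) (HNc : (0 < Nc)%N) (HNv : (0 < Nv)%N)
  (dVc : 'cV[R]_Nc) (dVv : 'cV[R]_Nv)
  (HdVc : forall i, 0 < dVc i 0) (HdVv : forall i, 0 < dVv i 0)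
  (Rf dRf : R -> R)
  (HRpos : forall x, 0 < Rf x)
  (HRder : forall x, is_derive Rf x (dRf x))
  (HRC1 : forall x, continuous dRf x)
  (HRmono : forall x y, x <= y -> Rf x <= Rf y)
  (p0 : R) (Interp : 'M[R]_(Nv, Nc)) (T : R)
  (p dp : R -> 'cV[R]_Nc) (v dv : R -> 'cV[R]_Nv)
  (DIVr : R -> 'M[R]_(Nc, Nv)) (rGRAD GRAD : R -> 'M[R]_(Nv, Nc))
  (ADVEC : R -> 'M[R]_Nv)
  (Hp : forall t, 0 < t < T -> vderiv p t (dp t))
  (Hv : forall t, 0 < t < T -> vderiv v t (dv t))
  (Hdp : forall t, 0 < t < T -> forall i, continuous (fun s => dp s i 0) t)
  (Hdv : forall t, 0 < t < T -> forall i, continuous (fun s => dv s i 0) t)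
  (Hi : forall t, 0 < t < T -> DIVr t + wadj dVc dVv (rGRAD t) = 0)
  (Hii : forall t, 0 < t < T -> rGRAD t *m cw (Qfun Rf p0) (p t) = GRAD t *m p t)
  (Hiii : forall t, 0 < t < T ->
     ADVEC t + wadj dVv dVv (ADVEC t) = diagv (Interp *m (DIVr t *m v t)))
  (Hmass : forall t, 0 < t < T ->
     vderiv (fun s => cw Rf (p s)) t (- (DIVr t *m v t)))
  (Hmom : forall t, 0 < t < T ->
     vderiv (fun s => diagv (Interp *m cw Rf (p s)) *m v s) t
            (- (ADVEC t *m v t + GRAD t *m p t))) :
  forall t, 0 < t < T ->
    is_derive (fun s => energy dVc dVv Rf p0 Interp (p s) (v s)) t 0.
Proof.
move=> t Ht.
have HcU := @diag_unit _ _ HdVc; have HvU := @diag_unit _ _ HdVv.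
have Hrho : forall i, is_derive (fun s => Rf (p s i 0)) t ((-(DIVr t *m v t)) i 0).
  move=> i; apply: (D_ext _ _ _ _ _ (Hmass t Ht i)) => s; by rewrite /cw mxE.
have HQ : forall i, is_derive (fun s => Qfun Rf p0 (p s i 0)) t
                     (dp t i 0 * (Rf (p t i 0))^-1).
  move=> i; exact: (is_derive_comp (Qfun Rf p0) (fun s => p s i 0) t _ _
                      (@Q_der Rf dRf p0 HRpos HRder (p t i 0)) (Hp t Ht i)).
have He : forall i, is_derive (fun s => eint Rf p0 (p s i 0)) t
            ((-(DIVr t *m v t)) i 0 * Qfun Rf p0 (p t i 0)).
  move=> i.
  apply: (D_ext (fun s => Rf (p s i 0) * Qfun Rf p0 (p s i 0) - (p s i 0 - p0))).
    by move=> s; rewrite (@eint_eq Rf dRf p0 HRpos HRder).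
  have X := (D_add (D_mul (Hrho i) (HQ i)) (D_opp (D_add (Hp t Ht i) (D_opp (D_const t p0))))).
  apply: (D_eq X).
  have := @Rf_neq0 Rf HRpos (p t i 0) => /eqP hn.
  field.
  exact: hn.
have T1 : is_derive (fun s => winner dVc (ones Nc) (cw (eint Rf p0) (p s))) t
   (\sum_i 1 * dVc i 0 * ((-(DIVr t *m v t)) i 0 * Qfun Rf p0 (p t i 0))).
  apply: (D_ext (fun s => \sum_i 1 * dVc i 0 * eint Rf p0 (p s i 0))).
    by move=> s; rewrite winner_sum; apply: eq_bigr => i _; rewrite !mxE.
  apply: D_sum => i; apply: (D_eq (D_mul (D_const t _) (He i))); ring.
have Ha : forall j, is_derive (fun s => (Interp *m cw Rf (p s)) j 0) t
                      ((Interp *m -(DIVr t *m v t)) j 0).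
  move=> j.
  apply: (D_ext (fun s => \sum_k Interp j k * Rf (p s k 0))).
    by move=> s; rewrite mxE; apply: eq_bigr => k _; rewrite /cw mxE.
  apply: (D_eq (D_sum (fun k => D_mul (D_const t (Interp j k)) (Hrho k)))).
  by rewrite mxE; apply: eq_bigr => k _; ring.
have Hdrv : forall j, (-(ADVEC t *m v t + GRAD t *m p t)) j 0 =
   (Interp *m -(DIVr t *m v t)) j 0 * v t j 0 + (Interp *m cw Rf (p t)) j 0 * dv t j 0.
  move=> j.
  have h1 := is_derive_unique _ _ _ (Hmom t Ht j).
  have h2 : is_derive (fun s => (diagv (Interp *m cw Rf (p s)) *m v s) j 0) t
     ((Interp *m -(DIVr t *m v t)) j 0 * v t j 0 + (Interp *m cw Rf (p t)) j 0 * dv t j 0).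
    apply: (D_ext (fun s => (Interp *m cw Rf (p s)) j 0 * v s j 0)).
      by move=> s; rewrite diagv_mul.
    exact: D_mul (Ha j) (Hv t Ht j).
  by rewrite -h1 (is_derive_unique _ _ _ h2).
have T2 : is_derive (fun s => winner dVv (v s) (diagv (Interp *m cw Rf (p s)) *m v s)) t
   (\sum_j ((dv t j 0 * dVv j 0 + v t j 0 * 0) * (diagv (Interp *m cw Rf (p t)) *m v t) j 0
            + v t j 0 * dVv j 0 * (-(ADVEC t *m v t + GRAD t *m p t)) j 0)).
  apply: (D_ext (fun s => \sum_j v s j 0 * dVv j 0 * (diagv (Interp *m cw Rf (p s)) *m v s) j 0)).
    by move=> s; rewrite winner_sum.
  apply: D_sum => j.
  exact: D_mul (D_mul (Hv t Ht j) (D_const t _)) (Hmom t Ht j).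
rewrite /energy.
apply: (D_eq (D_add T1 (D_mul (D_const t (2^-1)) T2))).
have A := @alg _ _ _ _ HcU HvU _ _ _ _ Interp (cw (Qfun Rf p0) (p t)) _ _ (Hi t Ht) (Hii t Ht) (Hiii t Ht).
rewrite -[RHS]A.
have s1 : \sum_i 1 * dVc i 0 * ((-(DIVr t *m v t)) i 0 * Qfun Rf p0 (p t i 0))
   = winner dVc (cw (Qfun Rf p0) (p t)) (-(DIVr t *m v t)).
  by rewrite winner_sum; apply: eq_bigr => i _; rewrite [cw _ _ i 0]mxE; ring.
rewrite s1 mul0r add0r -addrA; congr (_ + _).
rewrite !winner_sum !mulr_sumr -sumrN -big_split /=.
apply: eq_bigr => j _.
rewrite !diagv_mul Hdrv.
field; done.
Qed.
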